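(* Let $\|\cdot\|$ be a norm on $\mathbb{R}^{m\times d}$ with dual norm $\|U\|_\star=\sup_{\|D\|\le1}\langle U,D\rangle_F$, and let $C>0$ be a constant such that $\|\Delta\|_{1\to2}^2\le C\|\Delta\|^2$ for all $\Delta\in\mathbb{R}^{m\times d}$ (one may take $C=1$ when $\|\cdot\|=\|\cdot\|_{1\to2}$). Let $X\in\mathbb{R}^{m\times n}$ and $D\in\mathbb{R}^{m\times d}$. For every $\epsilon>0$ the set $\mathfrak{A}_\epsilon(X,D)$ is non-empty, and for every $D'\in\mathbb{R}^{m\times d}$, $$F_X(D')\le F_X(D)+L_X(D)\,\|D'-D\|+C_X(D)\,\|D'-D\|^2,$$ where $$L_X(D)=\inf_{\epsilon>0}\sup_{A\in\mathfrak{A}_\epsilon(X,D)}\tfrac1n\|(X-DA)A^\top\|_\star,\qquad C_X(D)=\inf_{\epsilon>0}\sup_{A\in\mathfrak{A}_\epsilon(X,D)}\tfrac{C}{2n}\sum_{i=1}^n\|\alpha_i\|_1^2$$ (these quantities lie in $[0,+\infty]$; the inequality is trivial if one of them is infinite and $D'\neq D$).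
   Context: A penalty is a function $g:\mathbb{R}^d\to\mathbb{R}\cup\{+\infty\}$ with $g\ge0$, not identically $+\infty$. For $x\in\mathbb{R}^m$, $D\in\mathbb{R}^{m\times d}$, $\alpha\in\mathbb{R}^d$: $\mathcal{L}_x(D,\alpha)=\tfrac12\|x-D\alpha\|_2^2+g(\alpha)$, $f_x(D)=\inf_\alpha\mathcal{L}_x(D,\alpha)$. For $X=[x_1,\dots,x_n]$, $F_X(D)=\frac1n\sum_i f_{x_i}(D)$. $\|\Delta\|_{1\to2}=\max_j\|\delta_j\|_2$ for $\Delta=[\delta_1,\dots,\delta_d]$. For $\epsilon>0$, $\mathfrak{A}_\epsilon(X,D)=\{A=[\alpha_1,\dots,\alpha_n]\in\mathbb{R}^{d\times n}:\ \mathcal{L}_{x_i}(D,\alpha_i)\le f_{x_i}(D)+\epsilon\ \text{for all } i\}$. $\langle\cdot,\cdot\rangle_F$ is the Frobenius inner product. *)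

(* Defs.v *)
From mathcomp Require Import ssreflect ssrfun ssrbool eqtype ssrnat seq fintype bigop.
From Stdlib Require Import Reals ClassicalEpsilon.
Set Implicit Arguments.
Unset Strict Implicit.
Unset Printing Implicit Defensive.
Local Open Scope R_scope.

Inductive Rbar : Type := Finite (r : R) | p_infty | m_infty.

Definition Rbar_le (x y : Rbar) : Prop :=
  match x, y with
  | m_infty, _ => True
  | _, p_infty => True
  | Finite a, Finite b => a <= b
  | _, _ => False
  end.

Definition Rbar_opp (x : Rbar) : Rbar :=
  match x with Finite r => Finite (- r) | p_infty => m_infty | m_infty => p_infty end.

(* addition; only used on values in (-oo, +oo], where it is the usual one *)
Definition Rbar_plus (x y : Rbar) : Rbar :=
  match x, y with
  | Finite a, Finite b => Finite (a + b)
  | p_infty, _ | _, p_infty => p_infty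
  | _, _ => m_infty
  end.

(* multiplication of an extended real by a real scalar c >= 0,
   with the convention 0 * (+oo) = 0 *)
Definition Rbar_scal (c : R) (x : Rbar) : Rbar :=
  if Req_EM_T c 0 then Finite 0 else
  match x with Finite r => Finite (c * r) | p_infty => p_infty | m_infty => m_infty end.

Definition Rbar_sup (E : Rbar -> Prop) : Rbar :=
  match excluded_middle_informative (E p_infty) with
  | left _ => p_infty
  | right _ =>
    match excluded_middle_informative (exists r, E (Finite r)) with
    | right _ => m_infty
    | left ne =>
      match excluded_middle_informative (bound (fun r => E (Finite r))) with
      | left b => Finite (proj1_sig (completeness (fun r => E (Finite r)) b ne))
      | right _ => p_infty
      end
    end
  end.

Definition Rbar_inf (E : Rbar -> Prop) : Rbar :=
  Rbar_opp (Rbar_sup (fun x => E (Rbar_opp x))).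

Definition vec (k : nat) := 'I_k -> R.
Definition mat (k l : nat) := 'I_k -> 'I_l -> R.

Definition sumR (k : nat) (f : 'I_k -> R) : R := \big[Rplus/0]_(i < k) f i.

Definition col (k l : nat) (j : 'I_l) (M : mat k l) : vec k := fun i => M i j.
Definition mat_sub (k l : nat) (A B : mat k l) : mat k l := fun i j => A i j - B i j.
Definition mat_add (k l : nat) (A B : mat k l) : mat k l := fun i j => A i j + B i j.
Definition mat_scale (k l : nat) (c : R) (A : mat k l) : mat k l := fun i j => c * A i j.
Definition mat_mul (k l p : nat) (A : mat k l) (B : mat l p) : mat k p :=
  fun i j => sumR (fun t => A i t * B t j).
Definition trmx (k l : nat) (A : mat k l) : mat l k := fun j i => A i j.
Definition mulv (k l : nat) (D : mat k l) (a : vec l) : vec k :=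
  fun i => sumR (fun j => D i j * a j).
Definition vsub (k : nat) (u v : vec k) : vec k := fun i => u i - v i.

Definition norm2sq (k : nat) (v : vec k) : R := sumR (fun i => v i ^ 2).
Definition norm2 (k : nat) (v : vec k) : R := sqrt (norm2sq v).
Definition norm1 (k : nat) (v : vec k) : R := sumR (fun i => Rabs (v i)).

Definition frob (k l : nat) (U V : mat k l) : R :=
  sumR (fun i => sumR (fun j => U i j * V i j)).

(* ||Delta||_{1->2} = max_j ||delta_j||_2 (max over columns; 0 if l = 0) *)
Definition norm_1to2 (k l : nat) (Delta : mat k l) : R :=
  \big[Rmax/0]_(j < l) norm2 (col j Delta).

Definition is_norm (k l : nat) (N : mat k l -> R) : Prop :=
  (forall A, N A = 0 -> forall i j, A i j = 0) /\
  (forall c A, N (mat_scale c A) = Rabs c * N A) /\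
  (forall A B, N (mat_add A B) <= N A + N B).

Definition dual_norm (k l : nat) (N : mat k l -> R) (U : mat k l) : Rbar :=
  Rbar_sup (fun v => exists D, N D <= 1 /\ v = Finite (frob U D)).

Definition is_penalty (d : nat) (g : vec d -> Rbar) : Prop :=
  (forall a, Rbar_le (Finite 0) (g a)) /\ (exists a, g a <> p_infty).

Definition Lx (m d : nat) (g : vec d -> Rbar) (x : vec m) (D : mat m d) (a : vec d) : Rbar :=
  Rbar_plus (Finite (/2 * norm2sq (vsub x (mulv D a)))) (g a).

Definition fx (m d : nat) (g : vec d -> Rbar) (x : vec m) (D : mat m d) : Rbar :=
  Rbar_inf (fun v => exists a, v = Lx g x D a).

Definition FX (m d n : nat) (g : vec d -> Rbar) (X : mat m n) (D : mat m d) : Rbar :=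
  Rbar_scal (/ INR n) (\big[Rbar_plus/Finite 0]_(i < n) fx g (col i X) D).

Definition in_Aeps (m d n : nat) (g : vec d -> Rbar) (eps : R)
    (X : mat m n) (D : mat m d) (A : mat d n) : Prop :=
  forall i : 'I_n,
    Rbar_le (Lx g (col i X) D (col i A)) (Rbar_plus (fx g (col i X) D) (Finite eps)).

Definition LX (m d n : nat) (g : vec d -> Rbar) (N : mat m d -> R)
    (X : mat m n) (D : mat m d) : Rbar :=
  Rbar_inf (fun v => exists eps, 0 < eps /\
    v = Rbar_sup (fun w => exists A, in_Aeps g eps X D A /\
          w = Rbar_scal (/ INR n)
                (dual_norm N (mat_mul (mat_sub X (mat_mul D A)) (trmx A))))).

Definition CX (m d n : nat) (g : vec d -> Rbar) (C : R)
    (X : mat m n) (D : mat m d) : Rbar :=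
  Rbar_inf (fun v => exists eps, 0 < eps /\
    v = Rbar_sup (fun w => exists A, in_Aeps g eps X D A /\
          w = Finite (C / (2 * INR n) * sumR (fun i => norm1 (col i A) ^ 2)))).

(* Main.v *)
From HB Require Import structures.
Require Import Defs.
From mathcomp Require Import ssreflect ssrfun ssrbool eqtype ssrnat seq fintype bigop.
From Stdlib Require Import Reals Lra Psatz Classical ClassicalEpsilon FunctionalExtensionality.
Set Warnings "-notation-overridden".
Set Implicit Arguments. Unset Strict Implicit.
Local Open Scope R_scope.
Notation RF := Defs.Finite.

Lemma RplusA : associative Rplus. Proof. move=> x y z; ring. Qed.
HB.instance Definition _ := Monoid.isComLaw.Build R 0 Rplus RplusA Rplus_comm Rplus_0_l.

Lemma sumR_ext k (f g : 'I_k -> R) : (forall i, f i = g i) -> sumR f = sumR g.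
Proof. move=> H; rewrite /sumR; apply: eq_bigr => i _; exact: H. Qed.

Lemma sumR_add k (f g : 'I_k -> R) : sumR (fun i => f i + g i) = sumR f + sumR g.
Proof. by rewrite /sumR big_split. Qed.

Lemma sumR_scal k c (f : 'I_k -> R) : sumR (fun i => c * f i) = c * sumR f.
Proof.
rewrite /sumR; symmetry; apply: (big_morph (fun x => c * x)).
- by move=> x y; ring.
- by ring.
Qed.

Lemma sumR_opp k (f : 'I_k -> R) : sumR (fun i => - f i) = - sumR f.
Proof.
rewrite /sumR; symmetry; apply: (big_morph Ropp).
- by move=> x y; ring.
- by ring.
Qed.

Lemma sumR_le k (f g : 'I_k -> R) : (forall i, f i <= g i) -> sumR f <= sumR g.
Proof.
move=> H; rewrite /sumR; apply: (big_ind2 (fun x y => x <= y)).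
- lra.
- move=> *; lra.
- move=> i _; exact: H.
Qed.

Lemma sumR_ge0 k (f : 'I_k -> R) : (forall i, 0 <= f i) -> 0 <= sumR f.
Proof.
move=> H; rewrite /sumR; apply: (big_ind (fun x => 0 <= x)).
- lra.
- move=> *; lra.
- move=> i _; exact: H.
Qed.

Lemma sumR_swap k l (f : 'I_k -> 'I_l -> R) :
  sumR (fun i => sumR (fun j => f i j)) = sumR (fun j => sumR (fun i => f i j)).
Proof. by rewrite /sumR exchange_big. Qed.

Lemma sumR_0 k : sumR (fun _ : 'I_k => 0) = 0.
Proof. by rewrite /sumR big1. Qed.

Lemma bigmax_ub k (F : 'I_k -> R) j : F j <= \big[Rmax/0]_(i < k) F i.
Proof.
have: j \in index_enum 'I_k by rewrite mem_index_enum.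
elim: (index_enum 'I_k) => [|a r IH] //=.
rewrite in_cons big_cons => /orP [/eqP ->|/IH H]; first exact: Rmax_l.
apply: Rle_trans H (Rmax_r _ _).
Qed.


Lemma Rbar_le_trans x y z : Rbar_le x y -> Rbar_le y z -> Rbar_le x z.
Proof. case: x; case: y; case: z => //= *; lra. Qed.

Lemma Rbar_le_total x y : ~ Rbar_le x y -> Rbar_le y x.
Proof. case: x; case: y => //= *; lra. Qed.

Lemma Rbar_oppK x : Rbar_opp (Rbar_opp x) = x.
Proof. by case: x => //= r; rewrite Ropp_involutive. Qed.

Lemma Rbar_le_opp x y : Rbar_le x y -> Rbar_le (Rbar_opp y) (Rbar_opp x).
Proof. case: x; case: y => //= *; lra. Qed.

Lemma sup_ub (E : Rbar -> Prop) x : E x -> Rbar_le x (Rbar_sup E).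
Proof.
move=> Ex; rewrite /Rbar_sup.
case: excluded_middle_informative => [//|Np]; first by case: x Ex.
case: excluded_middle_informative => [ne|Nf].
- case: excluded_middle_informative => [b|nb]; last by case: x Ex.
  case: (completeness _ b ne) => s [Hs1 Hs2] /=.
  case: x Ex => //= r Er; exact: Hs1.
- case: x Ex => //= r Er; exfalso; apply: Nf; by exists r.
Qed.

Lemma sup_lub (E : Rbar -> Prop) y : (forall x, E x -> Rbar_le x y) -> Rbar_le (Rbar_sup E) y.
Proof.
move=> H; rewrite /Rbar_sup.
case: excluded_middle_informative => [Ep|Np]; first exact: H.
case: excluded_middle_informative => [ne|Nf] //.
case: excluded_middle_informative => [b|nb].
- case: (completeness _ b ne) => s [Hs1 Hs2] /=.
  case: y H => [b0| |] H //.
  + apply: Hs2 => r Er; exact: (H _ Er).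
  + case: ne => r Er; exact: (H _ Er).
- case: y H => [b0| |] H //.
  + exfalso; apply: nb; exists b0 => r Er; exact: (H _ Er).
  + case: ne => r Er; exact: (H _ Er).
Qed.

Lemma inf_lb (E : Rbar -> Prop) x : E x -> Rbar_le (Rbar_inf E) x.
Proof.
move=> Ex; rewrite /Rbar_inf -{1}(Rbar_oppK x); apply: Rbar_le_opp.
apply: sup_ub; by rewrite Rbar_oppK.
Qed.

Lemma inf_glb (E : Rbar -> Prop) y : (forall x, E x -> Rbar_le y x) -> Rbar_le y (Rbar_inf E).
Proof.
move=> H; rewrite /Rbar_inf -(Rbar_oppK y); apply: Rbar_le_opp.
apply: sup_lub => v Ev; rewrite -(Rbar_oppK v); apply: Rbar_le_opp; exact: H.
Qed.

Lemma inf_approx (E : Rbar -> Prop) M M' :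
  Rbar_le (Rbar_inf E) (RF M) -> M < M' -> exists x, E x /\ Rbar_le x (RF M').
Proof.
move=> H1 H2; apply: NNPP => Hn.
have: Rbar_le (RF M') (Rbar_inf E).
  apply: inf_glb => x Ex; apply: Rbar_le_total => Hx; apply: Hn; by exists x.
move=> H3; have := Rbar_le_trans H3 H1 => /=; lra.
Qed.


Lemma norm2sq_ge0 k (v : vec k) : 0 <= norm2sq v.
Proof. apply: sumR_ge0 => i; exact: pow2_ge_0. Qed.

Lemma Lx_ge0 m d (g : vec d -> Rbar) x (D : mat m d) a :
  is_penalty g -> Rbar_le (RF 0) (Lx g x D a).
Proof.
move=> [Hg _]; rewrite /Lx; have := Hg a; have := norm2sq_ge0 (vsub x (mulv D a)).
case: (g a) => //= r *; lra.
Qed.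

Definition fr m d (g : vec d -> Rbar) (x : vec m) (D : mat m d) : R :=
  match fx g x D with RF r => r | _ => 0 end.

Lemma fx_fin m d (g : vec d -> Rbar) x (D : mat m d) :
  is_penalty g -> fx g x D = RF (fr g x D).
Proof.
move=> Hp; have H0 : Rbar_le (RF 0) (fx g x D).
  apply: inf_glb => v [a ->]; exact: Lx_ge0.
case: (Hp) => [Hg [a0 Ha0]].
have H1 : Rbar_le (fx g x D) (Lx g x D a0) by apply: inf_lb; exists a0.
rewrite /fr; move: H0 H1; case: (fx g x D) => //.
rewrite /Lx; move: Ha0; case: (g a0) => //.
Qed.

Lemma fr_le m d (g : vec d -> Rbar) x (D : mat m d) a ga :
  is_penalty g -> g a = RF ga -> fr g x D <= /2 * norm2sq (vsub x (mulv D a)) + ga.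
Proof.
move=> Hp Hga.
have H1 : Rbar_le (fx g x D) (Lx g x D a) by apply: inf_lb; exists a.
by move: H1; rewrite (fx_fin x D Hp) /Lx Hga.
Qed.

Lemma Aeps_nonempty m d n (g : vec d -> Rbar) eps (X : mat m n) (D : mat m d) :
  is_penalty g -> 0 < eps -> exists A, in_Aeps g eps X D A.
Proof.
move=> Hp He.
have H : forall i : 'I_n, exists a : vec d,
    Rbar_le (Lx g (col i X) D a) (Rbar_plus (fx g (col i X) D) (RF eps)).
  move=> i; rewrite (fx_fin _ D Hp) /=.
  have [v [[a ->] Hv]] : exists v, (exists a, v = Lx g (col i X) D a) /\
       Rbar_le v (RF (fr g (col i X) D + eps)).
    apply: (@inf_approx _ (fr g (col i X) D)); last lra.
    have := fx_fin (col i X) D Hp; rewrite /fx => -> /=; lra.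
  by exists a.
exists (fun j i => proj1_sig (constructive_indefinite_description _ (H i)) j).
move=> i; exact: (proj2_sig (constructive_indefinite_description _ (H i))).
Qed.

Lemma Aeps_mono m d n (g : vec d -> Rbar) eps eps' (X : mat m n) (D : mat m d) A :
  is_penalty g -> eps <= eps' -> in_Aeps g eps X D A -> in_Aeps g eps' X D A.
Proof.
move=> Hp Hle HA i; apply: Rbar_le_trans (HA i) _.
rewrite (fx_fin _ D Hp) /=; lra.
Qed.

Lemma Aeps_g m d n (g : vec d -> Rbar) eps (X : mat m n) (D : mat m d) A i :
  is_penalty g -> in_Aeps g eps X D A ->
  exists ga, g (col i A) = RF ga /\
    /2 * norm2sq (vsub (col i X) (mulv D (col i A))) + ga <= fr g (col i X) D + eps.
Proof.
move=> [Hg Hg2] HA; have := HA i; rewrite (fx_fin _ D (conj Hg Hg2)) /Lx.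
have := Hg (col i A); case: (g (col i A)) => //= r _ H; by exists r.
Qed.

Lemma norm2sq_ge0' k (v : vec k) : 0 <= norm2sq v.
Proof. apply: sumR_ge0 => i; exact: pow2_ge_0. Qed.

Lemma mulv_split m d (D D' : mat m d) a k :
  mulv D' a k = mulv D a k + mulv (mat_sub D' D) a k.
Proof.
rewrite /mulv -sumR_add; apply: sumR_ext => j; rewrite /mat_sub; ring.
Qed.

Lemma Q_expand m d (D D' : mat m d) x a :
  norm2sq (vsub x (mulv D' a)) =
  norm2sq (vsub x (mulv D a))
  - 2 * sumR (fun k => vsub x (mulv D a) k * mulv (mat_sub D' D) a k)
  + norm2sq (mulv (mat_sub D' D) a).
Proof.
rewrite /norm2sq /Rminus -sumR_scal -sumR_opp -sumR_add -sumR_add.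
apply: sumR_ext => k; rewrite /vsub (mulv_split D); ring.
Qed.

Lemma frob_id m d n (R0 : mat m n) (A : mat d n) (Dl : mat m d) :
  sumR (fun i => sumR (fun k => R0 k i * mulv Dl (col i A) k)) =
  frob (mat_mul R0 (trmx A)) Dl.
Proof.
rewrite /frob /mat_mul /mulv /trmx /col.
transitivity (sumR (fun k => sumR (fun j => sumR (fun i => R0 k i * A j i * Dl k j)))).
  rewrite sumR_swap; apply: sumR_ext => k.
  transitivity (sumR (fun i => sumR (fun j => R0 k i * A j i * Dl k j))).
    apply: sumR_ext => i; rewrite -sumR_scal; apply: sumR_ext => j; ring.
  exact: sumR_swap.
apply: sumR_ext => k; apply: sumR_ext => j.
rewrite Rmult_comm -sumR_scal; apply: sumR_ext => i; ring.
Qed.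

Lemma CS_seq (I : Type) (r : seq I) (a b : I -> R) :
  let S := \big[Rplus/0]_(i <- r) (a i * b i) in
  let W := \big[Rplus/0]_(i <- r) Rabs (a i) in
  let T := \big[Rplus/0]_(i <- r) (Rabs (a i) * b i ^ 2) in
  S ^ 2 <= W * T /\ 0 <= W /\ 0 <= T.
Proof.
elim: r => [|i r IH] /=; first by rewrite !big_nil; lra.
rewrite !big_cons.
move: IH; set S := \big[Rplus/0]_(j <- r) _; set W := \big[Rplus/0]_(j <- r) _;
  set T := \big[Rplus/0]_(j <- r) _ => -[H1 [H2 H3]].
have Ha := Rabs_pos (a i); have Hb := Rabs_pos (b i); have HS := Rabs_pos S.
have Ea : Rabs (a i) ^ 2 = a i ^ 2 by rewrite pow2_abs.
have Eb : Rabs (b i) ^ 2 = b i ^ 2 by rewrite pow2_abs.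
have ES : Rabs S ^ 2 = S ^ 2 by rewrite pow2_abs.
have K : 0 <= W * b i ^ 2 - 2 * Rabs S * Rabs (b i) + T.
  case: (Req_dec W 0) => HW.
  - have : S ^ 2 <= 0 by rewrite HW Rmult_0_l in H1.
    move=> HS2; have HS0 : S = 0 by nra.
    rewrite HW HS0 Rabs_R0; lra.
  - have HWp : 0 < W by lra.
    have : 0 <= W * (W * b i ^ 2 - 2 * Rabs S * Rabs (b i) + T).
      have : W * (W * b i ^ 2 - 2 * Rabs S * Rabs (b i) + T)
             = (W * Rabs (b i) - Rabs S) ^ 2 + (W * T - S ^ 2) by rewrite -Eb -ES; ring.
      move=> ->; have := pow2_ge_0 (W * Rabs (b i) - Rabs S); lra.
    move=> HH; nra.
have Hab : a i * b i * S <= Rabs (a i) * Rabs (b i) * Rabs S.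
  rewrite -!Rabs_mult; exact: Rle_abs.
split; last by split; [lra | have := pow2_ge_0 (b i); nra].
have : (Rabs (a i) + W) * (Rabs (a i) * b i ^ 2 + T) - (a i * b i + S) ^ 2
       = Rabs (a i) * (W * b i ^ 2 - 2 * Rabs S * Rabs (b i) + T)
         + 2 * (Rabs (a i) * Rabs (b i) * Rabs S - a i * b i * S)
         + (W * T - S ^ 2) + (Rabs (a i) ^ 2 - a i ^ 2) * b i ^ 2.
  ring.
rewrite Ea; move=> E; have := Rmult_le_pos _ _ Ha K; lra.
Qed.

Lemma CS k (a b : 'I_k -> R) :
  (sumR (fun j => a j * b j)) ^ 2 <=
  sumR (fun j => Rabs (a j)) * sumR (fun j => Rabs (a j) * b j ^ 2).
Proof. by have [] := CS_seq (index_enum 'I_k) a b. Qed.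

Lemma col_bound m d (Dl : mat m d) j : norm2sq (col j Dl) <= norm_1to2 Dl ^ 2.
Proof.
have H1 : norm2 (col j Dl) <= norm_1to2 Dl by exact: (bigmax_ub (fun j => norm2 (col j Dl))).
have H0 := norm2sq_ge0' (col j Dl).
rewrite -(sqrt_sqrt (norm2sq (col j Dl))) //.
have := sqrt_pos (norm2sq (col j Dl)); rewrite /norm2 in H1; nra.
Qed.

Lemma Dalpha_bound m d (Dl : mat m d) (a : vec d) :
  norm2sq (mulv Dl a) <= norm1 a ^ 2 * norm_1to2 Dl ^ 2.
Proof.
set W := norm1 a; set M := norm_1to2 Dl.
have HW : 0 <= W by apply: sumR_ge0 => j; exact: Rabs_pos.
apply: Rle_trans (_ : sumR (fun k => W * sumR (fun j => Rabs (a j) * Dl k j ^ 2)) <= _).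
  apply: sumR_le => k; rewrite /mulv.
  have -> : sumR (fun j => Dl k j * a j) = sumR (fun j => a j * Dl k j).
    by apply: sumR_ext => j; ring.
  exact: CS.
rewrite sumR_scal sumR_swap.
have -> : sumR (fun j => sumR (fun k => Rabs (a j) * Dl k j ^ 2))
          = sumR (fun j => Rabs (a j) * norm2sq (col j Dl)).
  by apply: sumR_ext => j; rewrite -sumR_scal.
have : sumR (fun j => Rabs (a j) * norm2sq (col j Dl)) <= sumR (fun j => M ^ 2 * Rabs (a j)).
  apply: sumR_le => j; have := col_bound Dl j; have := Rabs_pos (a j); rewrite -/M; nra.
rewrite sumR_scal -/W => H.
apply: Rle_trans (Rmult_le_compat_l _ _ _ HW H) _; right.
rewrite /W /norm1; ring.
Qed.


Lemma N_ge0 m d (N : mat m d -> R) A : is_norm N -> 0 <= N A.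
Proof.
move=> [H1 [H2 H3]].
have E : mat_add A (mat_scale (-1) A) = mat_scale 0 A.
  apply: functional_extensionality => i; apply: functional_extensionality => j.
  rewrite /mat_add /mat_scale; ring.
have := H3 A (mat_scale (-1) A); rewrite E !H2 Rabs_R0 Rabs_Ropp Rabs_R1; lra.
Qed.

Lemma frob_scale k l (U V : mat k l) c : frob U (mat_scale c V) = c * frob U V.
Proof.
rewrite /frob -sumR_scal; apply: sumR_ext => i; rewrite -sumR_scal.
apply: sumR_ext => j; rewrite /mat_scale; ring.
Qed.

Lemma dual_ge0 m d (N : mat m d -> R) U : is_norm N -> Rbar_le (RF 0) (dual_norm N U).
Proof.
move=> [H1 [H2 H3]]; apply: sup_ub; exists (mat_scale 0 U); split.
  rewrite H2 Rabs_R0; lra.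
by rewrite frob_scale Rmult_0_l.
Qed.

Lemma dual_lb m d (N : mat m d -> R) U Dl l :
  is_norm N -> 0 < N Dl -> Rbar_le (dual_norm N U) (RF l) -> - frob U Dl <= N Dl * l.
Proof.
move=> [H1 [H2 H3]] Hp Hd.
have : Rbar_le (RF (frob U (mat_scale (- / N Dl) Dl))) (dual_norm N U).
  apply: sup_ub; exists (mat_scale (- / N Dl) Dl); split => //.
  rewrite H2 Rabs_Ropp Rabs_pos_eq; last by apply: Rlt_le; apply: Rinv_0_lt_compat.
  rewrite Rinv_l; lra.
move=> H; have := Rbar_le_trans H Hd; rewrite frob_scale /= => H4.
have : N Dl * (- / N Dl * frob U Dl) <= N Dl * l by apply: Rmult_le_compat_l; lra.
have -> : N Dl * (- / N Dl * frob U Dl) = - frob U Dl by field; lra.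
done.
Qed.


Lemma sumR_const k e : sumR (fun _ : 'I_k => e) = INR k * e.
Proof.
rewrite /sumR big_const_ord; elim: k => [|k IH]; first by rewrite /=; ring.
rewrite S_INR Rmult_plus_distr_r -IH /=; ring.
Qed.

Lemma key_bound m d n (g : vec d -> Rbar) (N : mat m d -> R) C (X : mat m n) (D D' : mat m d) eps A :
  is_penalty g -> 0 < C ->
  (forall Delta : mat m d, norm_1to2 Delta ^ 2 <= C * N Delta ^ 2) ->
  0 < eps -> in_Aeps g eps X D A ->
  / INR n * sumR (fun i => fr g (col i X) D') <=
  / INR n * sumR (fun i => fr g (col i X) D) + / INR n * (INR n * eps)
  - / INR n * frob (mat_mul (mat_sub X (mat_mul D A)) (trmx A)) (mat_sub D' D)
  + N (mat_sub D' D) ^ 2 * (C / (2 * INR n) * sumR (fun i => norm1 (col i A) ^ 2)).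
Proof.
move=> Hp HC HB He HA.
set Dl := mat_sub D' D; set u := N Dl.
have Hi : forall i, fr g (col i X) D' <=
   fr g (col i X) D + eps
   - sumR (fun k => mat_sub X (mat_mul D A) k i * mulv Dl (col i A) k)
   + / 2 * (C * u ^ 2) * norm1 (col i A) ^ 2.
  move=> i; have [ga [Hga Hle]] := Aeps_g i Hp HA.
  have H1 := fr_le (col i X) D' Hp Hga.
  rewrite (Q_expand D) in H1.
  have H2 := Dalpha_bound Dl (col i A).
  have H3 := HB Dl.
  have H4 : 0 <= norm1 (col i A) ^ 2 by apply: pow2_ge_0.
  have H5 : norm1 (col i A) ^ 2 * norm_1to2 Dl ^ 2 <= norm1 (col i A) ^ 2 * (C * u ^ 2).
    exact: Rmult_le_compat_l.
  rewrite -/Dl in H1.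
  have -> : sumR (fun k => mat_sub X (mat_mul D A) k i * mulv Dl (col i A) k)
     = sumR (fun k => vsub (col i X) (mulv D (col i A)) k * mulv Dl (col i A) k) by [].
  lra.
have Hs := sumR_le Hi.
rewrite !sumR_add sumR_opp sumR_const sumR_scal (frob_id (mat_sub X (mat_mul D A)) A Dl) in Hs.
have Hc : 0 <= / INR n.
  case: n {X A HA Hi Hs} => [|n']; first by rewrite Rinv_0; lra.
  apply: Rlt_le; apply: Rinv_0_lt_compat; apply: lt_0_INR; by apply/ssrnat.ltP.
have := Rmult_le_compat_l _ _ _ Hc Hs.

have -> : C / (2 * INR n) = / INR n * (/ 2 * C) by rewrite /Rdiv Rinv_mult; ring.
move=> H; apply: Rle_trans H _; right.
ring.
Qed.



Lemma invn_ge0 n : 0 <= / INR n.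
Proof.
case: n => [|n']; first by rewrite Rinv_0; lra.
apply: Rlt_le; apply: Rinv_0_lt_compat; apply: lt_0_INR; by apply/ssrnat.ltP.
Qed.

Lemma invn_mul n e : 0 <= e -> / INR n * (INR n * e) <= e.
Proof.
case: n => [|n'] He; first by rewrite /=; lra.
have H : INR n'.+1 <> 0 by apply: not_0_INR.
rewrite -Rmult_assoc Rinv_l //; lra.
Qed.

Lemma scal_fin c r : Rbar_scal c (RF r) = RF (c * r).
Proof. rewrite /Rbar_scal; case: Req_EM_T => E //=; by rewrite E Rmult_0_l. Qed.

Lemma scal_ge0 c x : 0 <= c -> Rbar_le (RF 0) x -> Rbar_le (RF 0) (Rbar_scal c x).
Proof.
rewrite /Rbar_scal; case: Req_EM_T => /= [_|_]; first lra.
case: x => //= r *; nra.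
Qed.

Lemma FX_eq m d n (g : vec d -> Rbar) (X : mat m n) (D : mat m d) :
  is_penalty g -> FX g X D = RF (/ INR n * sumR (fun i => fr g (col i X) D)).
Proof.
move=> Hp; rewrite /FX -scal_fin; congr Rbar_scal.
rewrite (eq_bigr (fun i => RF (fr g (col i X) D))); last by move=> i _; exact: fx_fin.
rewrite /sumR; symmetry; apply: (big_morph RF) => //.
Qed.


Theorem mainTheorem3 (m d n : nat) (g : vec d -> Rbar) (N : mat m d -> R) (C : R)
  (X : mat m n) (D : mat m d) :
  is_penalty g ->
  is_norm N ->
  0 < C ->
  (forall Delta : mat m d, norm_1to2 Delta ^ 2 <= C * N Delta ^ 2) ->
  (forall eps, 0 < eps -> exists A : mat d n, in_Aeps g eps X D A) /\
  (forall D' : mat m d,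
     Rbar_le (FX g X D')
       (Rbar_plus (Rbar_plus (FX g X D) (Rbar_scal (N (mat_sub D' D)) (LX g N X D)))
                  (Rbar_scal (N (mat_sub D' D) ^ 2) (CX g C X D)))).
Proof.
move=> Hp HN HC HB; split; first by move=> eps He; exact: Aeps_nonempty.
move=> D'; rewrite !FX_eq //.
have Hu0 := N_ge0 (mat_sub D' D) HN.
case: (Req_dec (N (mat_sub D' D)) 0) => Hu.
  have ED : D' = D.
    apply: functional_extensionality => i; apply: functional_extensionality => j.
    have := (proj1 HN) _ Hu i j; rewrite /mat_sub; lra.
  rewrite Hu; have -> : (0 ^ 2 = 0)%R by ring.
  rewrite /Rbar_scal; case: Req_EM_T => //= _; rewrite ED; lra.
have Hup : 0 < N (mat_sub D' D) by lra.
set u := N (mat_sub D' D) in Hu Hup Hu0 *.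
set c := / INR n.
have Hc : 0 <= c by exact: invn_ge0.
have HK : forall A : mat d n, 0 <= C / (2 * INR n) * sumR (fun i => norm1 (col i A) ^ 2).
  move=> A; apply: Rmult_le_pos.
    rewrite /Rdiv Rinv_mult; have := invn_ge0 n; nra.
  apply: sumR_ge0 => i; exact: pow2_ge_0.
have LX0 : Rbar_le (RF 0) (LX g N X D).
  apply: inf_glb => v [eps [He ->]].
  have [A HA] := Aeps_nonempty X D Hp He.
  apply: Rbar_le_trans (sup_ub _); last by exists A; split; [exact: HA | reflexivity].
  apply: scal_ge0; [exact: invn_ge0 | exact: dual_ge0].
have CX0 : Rbar_le (RF 0) (CX g C X D).
  apply: inf_glb => v [eps [He ->]].
  have [A HA] := Aeps_nonempty X D Hp He.
  apply: Rbar_le_trans (sup_ub _); last by exists A; split; [exact: HA | reflexivity].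
  exact: HK.
have Hu2 : u ^ 2 <> 0 by apply: pow_nonzero.
case EL: (LX g N X D) LX0 => [l| |] //= Hl0; last first.
  rewrite /Rbar_scal; case: Req_EM_T => //.
case EC: (CX g C X D) CX0 => [k| |] //= Hk0; last first.
  rewrite /Rbar_scal; case: Req_EM_T => //; case: Req_EM_T => //.
rewrite !scal_fin /=.
apply: le_epsilon => e He.
set z := 1 + u + u ^ 2.
have Hz : 0 < z by have := pow2_ge_0 u; rewrite /z; lra.
set dl := e / z.
have Hdl : 0 < dl by apply: Rdiv_lt_0_compat.
have Hedl : dl * z = e by rewrite /dl; field; lra.
have HL1 : Rbar_le (LX g N X D) (RF l) by rewrite EL /=; lra.
have HLd : l < l + dl by lra.
have [x1 [[eps1 [He1 Ex1]] Hx1]] := inf_approx HL1 HLd.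
rewrite {}Ex1 in Hx1.
have HC1 : Rbar_le (CX g C X D) (RF k) by rewrite EC /=; lra.
have HCd : k < k + dl by lra.
have [x2 [[eps2 [He2 Ex2]] Hx2]] := inf_approx HC1 HCd.
rewrite {}Ex2 in Hx2.
set eps := Rmin dl (Rmin eps1 eps2).
have Heps : 0 < eps by rewrite /eps; repeat apply: Rmin_pos.
have [A HA] := Aeps_nonempty X D Hp Heps.
have HA1 : in_Aeps g eps1 X D A.
  apply: Aeps_mono Hp _ HA; rewrite /eps; apply: Rle_trans (Rmin_r _ _) (Rmin_l _ _).
have HA2 : in_Aeps g eps2 X D A.
  apply: Aeps_mono Hp _ HA; rewrite /eps; apply: Rle_trans (Rmin_r _ _) (Rmin_r _ _).
have HL : Rbar_le (Rbar_scal c (dual_norm N (mat_mul (mat_sub X (mat_mul D A)) (trmx A))))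
              (RF (l + dl)).
  apply: Rbar_le_trans Hx1; apply: sup_ub; by exists A.
have HCq : C / (2 * INR n) * sumR (fun i => norm1 (col i A) ^ 2) <= k + dl.
  have : Rbar_le (RF (C / (2 * INR n) * sumR (fun i => norm1 (col i A) ^ 2))) (RF (k + dl)).
    apply: Rbar_le_trans Hx2; apply: sup_ub; by exists A.
  by [].
have Hkey := @key_bound m d n g N C X D D' eps A Hp HC HB Heps HA.
rewrite -/u -/c in Hkey.
have Hfrob : - (c * frob (mat_mul (mat_sub X (mat_mul D A)) (trmx A)) (mat_sub D' D))
             <= u * (l + dl).
  move: HL; rewrite /Rbar_scal -/c; case: Req_EM_T => [Ec _|Ec].
    rewrite Ec; have := Rmult_le_pos _ _ Hu0 (Rlt_le _ _ (Rplus_le_lt_0_compat _ _ Hl0 Hdl)); lra.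
  have Hd0 := dual_ge0 (mat_mul (mat_sub X (mat_mul D A)) (trmx A)) HN.
  case ED: (dual_norm _ _) Hd0 => [du| |] //= _ Hdu.
  have := dual_lb HN Hup (eq_ind_r (fun x => Rbar_le x (RF du)) (Rle_refl du : Rbar_le (RF du) (RF du)) ED).
  have Hdu' : c * du <= l + dl by exact: Hdu.
  move=> H; have : c * (- frob (mat_mul (mat_sub X (mat_mul D A)) (trmx A)) (mat_sub D' D))
                   <= c * (u * du) by apply: Rmult_le_compat_l.
  have := Rmult_le_compat_l _ _ _ (Rlt_le _ _ Hup) Hdu'.
  nra.
have Hn := invn_mul n (Rlt_le _ _ Heps).
have Hepsdl : eps <= dl by exact: Rmin_l.
have Hu2p : 0 <= u ^ 2 by apply: pow2_ge_0.
have H2 := Rmult_le_compat_l _ _ _ Hu2p HCq.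
have Ee : e = dl + u * dl + u ^ 2 * dl by rewrite -Hedl /z; ring.
have E1 : u * (l + dl) = u * l + u * dl by ring.
have E2 : u ^ 2 * (k + dl) = u ^ 2 * k + u ^ 2 * dl by ring.
rewrite -/c in Hn.
have E3 : u * (u * 1) * k = u ^ 2 * k by ring.
rewrite E3; lra.
Qed.
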